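(* Let $N,d\in\mathbb{N}^*$, $\alpha>0$, $A\in\mathbb{R}_+^{N\times N}$, and $\psi:\mathbb{R}_+\to\mathbb{R}_+$ with $(r_1-r_2)(\psi(r_1)-\psi(r_2))\le0$ for all $r_1,r_2\ge0$ and $0<\psi(r)\le\psi(0)\le1$. Let $\pi$ be a probability measure on $\{1,\dots,N\}$ with $\pi_iA_{ij}=\pi_jA_{ji}$ for all $i\ne j$. Let $(x_i,v_i)_i$ be a solution on $\mathbb{R}_+$ of $$\frac{dx_i}{dt}=v_i,\qquad\frac{dv_i}{dt}=\alpha\sum_{j\ne i}A_{ij}\psi(\|x_j-x_i\|_2)(v_j-v_i)$$ which flocks, i.e. $\sup_{t\ge0}\sup_{i,j}\|x_i(t)-x_j(t)\|_2<+\infty$ and $\sup_{i,j}\|v_i(t)-v_j(t)\|_2\to0$ as $t\to+\infty$. Then $\|v_i(t)-v^*\|_2\to0$ as $t\to+\infty$ for all $i$, where $v^*=\sum_{i=1}^N\pi_iv_i(0)$.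
   Context: $\|\cdot\|_2$ is the Euclidean norm on $\mathbb{R}^d$. *)

(* Defs.v *)
From HB Require Import structures.
From mathcomp Require Import all_boot all_order all_algebra.
From mathcomp Require Import all_classical all_reals all_analysis.
Set Implicit Arguments. Unset Strict Implicit. Unset Printing Implicit Defensive.
Import Order.TTheory GRing.Theory Num.Theory.
Import numFieldNormedType.Exports.
Local Open Scope ring_scope.

Definition enorm (R : realType) (d : nat) (u : 'rV[R]_d) : R :=
  Num.sqrt (\sum_(k < d) u ord0 k ^+ 2).

(* Main.v *)
Require Import Defs.
From HB Require Import structures.
From mathcomp Require Import all_boot all_order all_algebra.
From mathcomp Require Import all_classical all_reals all_analysis.
Import Order.TTheory GRing.Theory Num.Theory.
Import numFieldNormedType.Exports.
Local Open Scope ring_scope.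
Local Open Scope classical_set_scope.
Lemma is_derive_coord (R : realType) d (f : R -> 'rV[R]_d) (t : R) df c :
  is_derive t 1 f df -> is_derive t 1 (fun s => f s ord0 c) (df ord0 c).
Proof.
move=> H.
have h1 : (fun h => h^-1 *: ((f \o shift t) (h *: 1) - f t)) @ 0^' --> df.
  rewrite -(@derive_val _ _ _ _ _ _ _ H). exact: (@ex_derive _ _ _ _ _ _ _ H).
have h2 : (fun h : R => h^-1 *: (((fun s => f s ord0 c) \o shift t) (h *: 1) - f t ord0 c)) @ 0^' --> df ord0 c.
  have := cvg_comp _ _ h1 (@coord_continuous R 1 d ord0 c df).
  apply: cvg_trans; apply: near_eq_cvg; near=> h.
  by rewrite /= !mxE.
split; first by apply/cvg_ex; exists (df ord0 c).
by rewrite /derive; apply: cvg_lim.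
Unshelve. all: by end_near. Qed.
Lemma cst_pos (R : realType) d (m : R -> 'rV[R]_d) :
  (forall t : R, 0 < t -> is_derive t 1 m 0) -> forall t : R, 0 < t -> m t = m 1.
Proof.
move=> H.
have key : forall c (a b : R), 0 < a -> a <= b -> m a ord0 c = m b ord0 c.
  move=> c a b a0 ab.
  have D : forall x : R, 0 < x -> is_derive x 1 (fun s => m s ord0 c) 0.
    move=> x x0; have := @is_derive_coord R d m x 0 c (H x x0); by rewrite mxE.
  have Dab : forall x, x \in `]a, b[%R -> is_derive x 1 (fun s => m s ord0 c) ((fun _ => 0) x).
    move=> x xab; apply: D; apply: (lt_trans a0); by rewrite (itvP xab).
  have cont : {within `[a, b], continuous (fun s => m s ord0 c)}.
    apply: derivable_within_continuous => x xab.
    have x0 : 0 < x by apply: (lt_le_trans a0); rewrite (itvP xab).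
    exact: (@ex_derive _ _ _ _ _ _ _ (D x x0)).
  have [z _ E] := @MVT_segment R (fun s => m s ord0 c) (fun _ => 0) a b ab Dab cont.
  by move: E; rewrite mul0r => /eqP; rewrite subr_eq0 => /eqP ->.
move=> t t0; apply/matrixP => i c; rewrite (ord1 i).
have [t1|t1] := leP t 1; first exact: key.
by apply/esym/key => //; apply: ltW.
Qed.
Lemma enormN (R : realType) d (u : 'rV[R]_d) : enorm (- u) = enorm u.
Proof. by rewrite /enorm; congr Num.sqrt; apply: eq_bigr => c _; rewrite mxE sqrrN. Qed.

Lemma coord_le_enorm (R : realType) d (u : 'rV[R]_d) c : `|u ord0 c| <= enorm u.
Proof.
rewrite /enorm -sqrtr_sqr ler_sqrt; last by apply: sumr_ge0 => k _; apply: sqr_ge0.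
rewrite (bigD1 c) //= lerDl; apply: sumr_ge0 => k _; apply: sqr_ge0.
Qed.

Lemma enorm_le (R : realType) d (u : 'rV[R]_d) (K : R) :
  (forall c, `|u ord0 c| <= K) -> enorm u <= Num.sqrt d%:R * K.
Proof.
move=> H.
case: d u H => [|d'] u H.
  by rewrite /enorm big_ord0 sqrtr0 mul0r.
have K0 : 0 <= K by apply: le_trans (H ord0).
have -> : Num.sqrt (d'.+1)%:R * K = Num.sqrt (\sum_(c < d'.+1) K ^+ 2).
  by rewrite sumr_const card_ord -[in RHS]mulr_natr [RHS]sqrtrM ?sqr_ge0 // sqrtr_sqr ger0_norm // mulrC.
rewrite /enorm ler_sqrt; last by apply: sumr_ge0 => k _; apply: sqr_ge0.
apply: ler_sum => c _; rewrite -real_normK ?num_real //.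
by rewrite lerXn2r ?nnegrE ?normr_ge0 // H.
Qed.

Lemma sum_zero (R : realType) N d (w : 'I_N -> 'I_N -> R) (u : 'I_N -> 'rV[R]_d) :
 (forall k j, w k j = w j k) -> \sum_k \sum_j w k j *: (u j - u k) = 0.
Proof.
move=> ws; set S := (X in X = 0).
have e : S = - S.
  rewrite {1}/S exchange_big /= /S -sumrN; apply: eq_bigr => j _.
  rewrite -sumrN; apply: eq_bigr => k _.
  by rewrite ws !scalerBr opprB.
have : (2 : R) *: S = 0 by rewrite scaler_nat mulr2n {1}e addNr.
by move=> /eqP; rewrite scaler_eq0 pnatr_eq0 /= => /eqP.
Qed.
Theorem proposition4p5 (R : realType) (N d : nat) (alpha : R)
  (A : 'M[R]_N) (psi : R -> R) (pi : 'I_N -> R)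
  (x v : 'I_N -> R -> 'rV[R]_d) :
  (0 < N)%N -> (0 < d)%N -> 0 < alpha ->
  (forall i j, 0 <= A i j) ->
  (forall r1 r2, 0 <= r1 -> 0 <= r2 -> (r1 - r2) * (psi r1 - psi r2) <= 0) ->
  (forall r, 0 <= r -> 0 < psi r /\ psi r <= psi 0) ->
  psi 0 <= 1 ->
  (forall i, 0 <= pi i) -> \sum_(i < N) pi i = 1 ->
  (forall i j, i != j -> pi i * A i j = pi j * A j i) ->
  (* (x, v) solves the system on R_+ : differentiable for t > 0, *)
  (forall i (t : R), 0 < t -> is_derive t 1 (x i) (v i t)) ->
  (forall i (t : R), 0 < t ->
     is_derive t 1 (v i)
       (alpha *: \sum_(j < N | j != i)
          (A i j * psi (enorm (x j t - x i t))) *: (v j t - v i t))) ->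
  (* and continuous from the right at t = 0 *)
  (forall i, x i t @[t --> 0^'+] --> x i 0) ->
  (forall i, v i t @[t --> 0^'+] --> v i 0) ->
  (* flocking *)
  (exists M : R, forall t : R, 0 <= t -> forall i j, enorm (x i t - x j t) <= M) ->
  (\big[Num.max/0]_(i < N) \big[Num.max/0]_(j < N) enorm (v i t - v j t))
     @[t --> +oo] --> 0 ->
  forall i, enorm (v i t - \sum_(k < N) pi k *: v k 0) @[t --> +oo] --> 0.
Proof.
move=> N0 d0 a0 Apos psimon psipos psi1 pipos pisum pisym Dx Dv cx cv flock Mcvg i.
pose m := fun t => \sum_(k < N) pi k *: v k t.
have Hm : forall t : R, 0 < t -> is_derive t 1 m 0.
  move=> t t0.
  have -> : m = \sum_(k < N) (pi k \*: v k) by rewrite fct_sumE.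
  apply: is_derive_eq; first by apply: is_derive_sum => k; apply: is_deriveZ; exact: Dv.
  pose w := fun k j => pi k * (A k j * psi (enorm (x j t - x k t))).
  have ws : forall k j, w k j = w j k.
    move=> k j; have [->//|kj] := eqVneq k j.
    by rewrite /w !mulrA pisym // -opprB enormN.
  transitivity (alpha *: \sum_k \sum_j w k j *: (v j t - v k t)).
    rewrite scaler_sumr; apply: eq_bigr => k _.
    rewrite scalerA mulrC -scalerA; congr (_ *: _).
    rewrite scaler_sumr [RHS](bigD1 k) //= subrr scaler0 add0r.
    by apply: eq_bigr => j _; rewrite scalerA.
  by rewrite (@sum_zero R N d w (fun k => v k t) ws) scaler0.
have Hc := @cst_pos R d m Hm.
have m0 : m 0 = m 1.
  have L1 : m t @[t --> 0^'+] --> m 0.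
    apply: (@cvg_big _ _ +%R 0 xpredT add_continuous).
    move=> k _.
    apply: cvgZ => //; exact: cvg_cst.
  have L2 : m t @[t --> 0^'+] --> m 1.
    apply: cvg_near_cst; near=> t.
    rewrite Hc //; near: t; exact: nbhs_right_gt.
  exact: (cvg_unique _ L1 L2).
pose Mx := fun t => \big[Num.max/0]_(i < N) \big[Num.max/0]_(j < N) enorm (v i t - v j t).
have B : forall t : R, 0 < t ->
    enorm (v i t - \sum_(k < N) pi k *: v k 0) <= Num.sqrt d%:R * Mx t.
  move=> t t0.
  have -> : \sum_(k < N) pi k *: v k 0 = m t by rewrite -/(m 0) m0 Hc.
  have -> : v i t - m t = \sum_(k < N) pi k *: (v i t - v k t).
    under eq_bigr do rewrite scalerBr.
    by rewrite sumrB -scaler_suml pisum scale1r.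
  apply: enorm_le => c.
  rewrite summxE; apply: le_trans (ler_norm_sum _ _ _) _.
  rewrite -[Mx t]mul1r -pisum mulr_suml; apply: ler_sum => k _.
  rewrite mxE normrM ger0_norm //; apply: ler_wpM2l => //.
  apply: le_trans (@coord_le_enorm R d _ c) _.
  have h1 : enorm (v i t - v k t) <= \big[Num.max/0]_(j < N) enorm (v i t - v j t).
    by apply: le_bigmax.
  apply: le_trans h1 _.
  by rewrite /Mx; apply: le_bigmax.
apply: (@squeeze_cvgr _ _ _ _ (fun _ => 0) (fun t => Num.sqrt d%:R * Mx t)).
- near=> t.
  apply/andP; split; first exact: sqrtr_ge0.
  apply: B; near: t; exact: nbhs_pinfty_gt.
- exact: cvg_cst.
- rewrite -(mulr0 (Num.sqrt d%:R)); apply: cvgMl_tmp; exact: Mcvg.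
Unshelve. all: by end_near.
Qed.
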